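(* Let $\psi_0:\mathbb{R}\to\mathbb{R}$ be a càdlàg function with $\lim_{|x|\to\infty}x^{-2}\psi_0(x)=0$, and let $\bar c$, $a(\cdot)$ and $\mathcal{A}$ be as in the context. Then (i) $\mathrm{Supp}(d\bar c)\subseteq \mathcal{A}$; (ii) $\{y:\exists\, x \text{ with } a(x)=y\}\subseteq \mathrm{Supp}(d\bar c)$. Consequently, if $\{y:\exists\, x \text{ with } a(x)=y\}$ is closed, then $\mathrm{Supp}(d\bar c)=\mathcal{A}$.
   Context: For $x\in\mathbb{R}$, $a(x)$ is the largest maximizer of $y\mapsto \psi_0(y)\vee\psi_0(y-)-\tfrac12(y-x)^2$ over $y\in\mathbb{R}$, i.e. the supremum of the set of all $y$ at which this supremum is attained. The shock structure is $\mathcal{A}:=\overline{\{y\in\mathbb{R}: a(x)=y \text{ for some } x\in\mathbb{R}\}}$ (closure of the range of $a$). $\bar C:\mathbb{R}\to\mathbb{R}$ denotes the concave majorant of $x\mapsto \psi_0(x)-\tfrac12 x^2$, i.e. the minimal concave function with $\bar C(x)\ge (\psi_0(x)\vee\psi_0(x-))-\tfrac12x^2$ for all $x$; $\bar c$ is its right-continuous derivative, which is non-increasing, and $d\bar c$ is the associated Stieltjes measure; $\mathrm{Supp}(d\bar c)$ is its support. *)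

(* Defs.v *)
From Stdlib Require Import Reals Lra ClassicalEpsilon.
Open Scope R_scope.

Definition is_left_lim (f : R -> R) (x l : R) : Prop :=
  forall eps, 0 < eps -> exists d, 0 < d /\
    forall y, x - d < y < x -> Rabs (f y - l) < eps.

Definition cadlag (f : R -> R) : Prop :=
  (forall x eps, 0 < eps -> exists d, 0 < d /\
     forall y, x <= y < x + d -> Rabs (f y - f x) < eps) /\
  (forall x, exists l, is_left_lim f x l).

(* f(x-) : the left limit (well defined when f is cadlag) *)
Definition left_lim (f : R -> R) (x : R) : R :=
  epsilon (inhabits 0) (fun l => is_left_lim f x l).

Definition subquadratic (f : R -> R) : Prop :=
  forall eps, 0 < eps -> exists M, forall x, M < Rabs x ->
    Rabs (f x / x ^ 2) < eps.

Definition psimax (psi : R -> R) (y : R) : R := Rmax (psi y) (left_lim psi y).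

Definition objective (psi : R -> R) (x y : R) : R :=
  psimax psi y - / 2 * (y - x) ^ 2.

Definition argmax (psi : R -> R) (x : R) (y : R) : Prop :=
  forall z, objective psi x z <= objective psi x y.

Definition a_rel (psi : R -> R) (x y : R) : Prop :=
  is_lub (argmax psi x) y.

Definition a_range (psi : R -> R) (y : R) : Prop := exists x, a_rel psi x y.

Definition closureR (S : R -> Prop) (y : R) : Prop :=
  forall eps, 0 < eps -> exists s, S s /\ Rabs (s - y) < eps.

Definition closed_setR (S : R -> Prop) : Prop := forall y, closureR S y -> S y.

Definition shock_structure (psi : R -> R) : R -> Prop := closureR (a_range psi).

Definition concave (C : R -> R) : Prop :=
  forall x y t, 0 <= t <= 1 -> t * C x + (1 - t) * C y <= C (t * x + (1 - t) * y).

Definition is_concave_majorant (h C : R -> R) : Prop :=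
  concave C /\ (forall x, h x <= C x) /\
  (forall D, concave D -> (forall x, h x <= D x) -> forall x, C x <= D x).

Definition is_right_deriv (C c : R -> R) : Prop :=
  forall x eps, 0 < eps -> exists d, 0 < d /\
    forall h, 0 < h < d -> Rabs ((C (x + h) - C x) / h - c x) < eps.

(* Stieltjes measure of the open interval (u,v) for a non-increasing
   right-continuous c:  |dc|((u,v)) = c(u) - c(v-). *)
Definition stieltjes_open (c : R -> R) (u v : R) : R := c u - left_lim c v.

Definition supp_dc (c : R -> R) (y : R) : Prop :=
  forall eps, 0 < eps -> stieltjes_open c (y - eps) (y + eps) <> 0.

(* Main.v *)
Require Import Defs.
From Stdlib Require Import Reals Lra Psatz ClassicalEpsilon Classical.
Open Scope R_scope.

Lemma LL_spec f v : (exists l, is_left_lim f v l) -> is_left_lim f v (left_lim f v).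
Proof. intros H. unfold left_lim. apply epsilon_spec. exact H. Qed.

Lemma LL_unique f v l1 l2 : is_left_lim f v l1 -> is_left_lim f v l2 -> l1 = l2.
Proof.
  intros H1 H2. destruct (Req_dec l1 l2) as [|Hne]; auto.
  assert (Hab : Rabs (l1 - l2) = l1 - l2 \/ Rabs (l1 - l2) = -(l1 - l2))
    by (unfold Rabs; destruct (Rcase_abs (l1 - l2)); [right|left]; lra).
  assert (He0 : 0 < Rabs (l1 - l2)) by (apply Rabs_pos_lt; lra).
  assert (He : 0 < Rabs (l1 - l2) / 2) by lra.
  destruct (H1 _ He) as [d1 [Hd1 H1']]. destruct (H2 _ He) as [d2 [Hd2 H2']].
  set (u := v - Rmin d1 d2 / 2).
  assert (Hm := Rmin_l d1 d2). assert (Hm2 := Rmin_r d1 d2).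
  assert (Hp : 0 < Rmin d1 d2) by (apply Rmin_pos; auto).
  specialize (H1' u ltac:(unfold u; lra)). specialize (H2' u ltac:(unfold u; lra)).
  apply Rabs_def2 in H1'. apply Rabs_def2 in H2'. destruct Hab; lra.
Qed.

Lemma LL_le f v l K : is_left_lim f v l ->
  (exists d, 0 < d /\ forall u, v - d < u < v -> f u <= K) -> l <= K.
Proof.
  intros H [d0 [Hd0 Hu]]. apply Rnot_lt_le; intro Hlt.
  destruct (H (l - K) ltac:(lra)) as [d [Hd Hd']].
  assert (Hm := Rmin_l d d0). assert (Hm2 := Rmin_r d d0).
  assert (Hp : 0 < Rmin d d0) by (apply Rmin_pos; auto).
  set (u := v - Rmin d d0 / 2).
  specialize (Hd' u ltac:(unfold u; lra)). specialize (Hu u ltac:(unfold u; lra)).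
  apply Rabs_def2 in Hd'. lra.
Qed.

Lemma LL_const f v k : (exists d, 0 < d /\ forall u, v - d < u < v -> f u = k) ->
  left_lim f v = k.
Proof.
  intros [d [Hd Hu]].
  assert (H : is_left_lim f v k).
  { intros e He. exists d; split; auto. intros u Hu'. rewrite (Hu u Hu').
    unfold Rminus. rewrite Rplus_opp_r, Rabs_R0. lra. }
  apply (LL_unique f v); auto. apply LL_spec. eauto.
Qed.

Lemma MON_LL (c : R -> R) v : (forall u w, u < w -> c w <= c u) ->
  exists l, is_left_lim c v l.
Proof.
  intros Hmon.
  set (E := fun r => exists u, v - 1 < u < v /\ r = - c u).
  assert (Hb : bound E).
  { exists (- c v). intros r [u [Hu ->]]. specialize (Hmon u v ltac:(lra)). lra. }
  assert (Hne : exists r, E r) by (exists (- c (v - /2)); exists (v - /2); split; [lra|auto]).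
  destruct (completeness E Hb Hne) as [M [HM1 HM2]].
  exists (- M). intros eps Heps.
  destruct (classic (exists r, E r /\ M - eps < r)) as [[r [[u0 [Hu0 ->]] Hr]] | Hno].
  - exists (v - u0). split; [lra|]. intros u Hu.
    assert (E (- c u)) by (exists u; split; [lra|auto]).
    specialize (HM1 _ H). specialize (Hmon u0 u ltac:(lra)).
    apply Rabs_def1; lra.
  - exfalso. assert (M <= M - eps); [|lra]. apply HM2. intros r Er.
    apply Rnot_lt_le. intro. apply Hno. eauto.
Qed.

Lemma compact_bound (g : R -> R) (Good : R -> Prop)
  (HG : forall K1 K2, Good K1 -> Good K2 -> Good (Rmax K1 K2)) a b :
  a <= b ->
  (forall u, a <= u <= b -> exists d, 0 < d /\ exists K, Good K /\
      forall v, Rabs (v - u) < d -> g v <= K) ->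
  exists K, Good K /\ forall u, a <= u <= b -> g u <= K.
Proof.
  intros Hab Hloc.
  set (S t := a <= t <= b /\ exists K, Good K /\ forall u, a <= u <= t -> g u <= K).
  assert (Sa : S a).
  { destruct (Hloc a (conj (Rle_refl a) Hab)) as [d [Hd [K [HK HK']]]].
    split; [lra|]. exists K; split; auto. intros u Hu. apply HK'.
    replace (u - a) with 0 by lra. rewrite Rabs_R0; lra. }
  assert (Hb : bound S) by (exists b; intros t [Ht _]; lra).
  destruct (completeness S Hb (ex_intro _ a Sa)) as [s [Hs1 Hs2]].
  assert (Has : a <= s) by (apply Hs1; exact Sa).
  assert (Hsb : s <= b) by (apply Hs2; intros t [Ht _]; lra).
  destruct (Hloc s (conj Has Hsb)) as [d [Hd [K0 [HK0 HK0']]]].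
  assert (Ht : exists t, S t /\ s - d < t).
  { apply NNPP; intro Hno.
    assert (s <= s - d); [|lra]. apply Hs2. intros t St. apply Rnot_lt_le. intro.
    apply Hno. exists t; split; auto. }
  destruct Ht as [t [[Ht1 [K1 [HK1 HK1']]] Hts]].
  assert (Htl : t <= s) by (apply Hs1; split; [auto|exists K1; auto]).
  set (t' := Rmin (s + d/2) b).
  assert (Ht'1 := Rmin_l (s + d/2) b). assert (Ht'2 := Rmin_r (s + d/2) b).
  assert (Ht'3 : t' = s + d/2 \/ t' = b) by (unfold t', Rmin; destruct Rle_dec; auto).
  assert (St' : S t').
  { split. { fold t' in Ht'1, Ht'2. destruct Ht'3; lra. }
    exists (Rmax K1 K0); split; [apply HG; auto|].
    intros u Hu. destruct (Rle_or_lt u t).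
    - eapply Rle_trans; [apply HK1'; lra | apply Rmax_l].
    - eapply Rle_trans; [apply HK0' | apply Rmax_r].
      fold t' in Ht'1. apply Rabs_def1; lra. }
  assert (t' <= s) by (apply Hs1; exact St').
  assert (Heq : t' = b) by (destruct Ht'3; lra).
  rewrite Heq in St'. destruct St' as [_ [K [HK HK']]]. exists K; auto.
Qed.

Lemma psimax_usc psi : cadlag psi -> forall w eps, 0 < eps -> exists d, 0 < d /\
  forall v, Rabs (v - w) < d -> psimax psi v <= psimax psi w + eps.
Proof.
  intros [Hrc Hll] w eps Heps.
  assert (HL := LL_spec psi w (Hll w)). set (L := left_lim psi w) in *.
  destruct (Hrc w (eps/2) ltac:(lra)) as [d1 [Hd1 H1]].
  destruct (HL (eps/2) ltac:(lra)) as [d2 [Hd2 H2]].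
  assert (Hm := Rmin_l d1 d2). assert (Hm2 := Rmin_r d1 d2).
  assert (Hp : 0 < Rmin d1 d2) by (apply Rmin_pos; auto).
  exists (Rmin d1 d2); split; auto. intros v Hv. apply Rabs_def2 in Hv.
  assert (Hw1 : psi w <= psimax psi w) by apply Rmax_l.
  assert (Hw2 : L <= psimax psi w) by apply Rmax_r.
  assert (HLv := LL_spec psi v (Hll v)).
  destruct (Rtotal_order v w) as [Hlt | [Heq | Hgt]].
  - change (psimax psi v) with (Rmax (psi v) (left_lim psi v)). apply Rmax_lub.
    + specialize (H2 v ltac:(lra)). apply Rabs_def2 in H2. lra.
    + assert (left_lim psi v <= L + eps/2); [|lra].
      apply (LL_le psi v); auto. exists (v - (w - Rmin d1 d2)). split; [lra|].
      intros u Hu. specialize (H2 u ltac:(lra)). apply Rabs_def2 in H2. lra.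
  - subst. lra.
  - change (psimax psi v) with (Rmax (psi v) (left_lim psi v)). apply Rmax_lub.
    + specialize (H1 v ltac:(lra)). apply Rabs_def2 in H1. lra.
    + assert (left_lim psi v <= psi w + eps/2); [|lra].
      apply (LL_le psi v); auto. exists (v - w). split; [lra|].
      intros u Hu. specialize (H1 u ltac:(lra)). apply Rabs_def2 in H1. lra.
Qed.

Lemma obj_usc psi : cadlag psi -> forall x w eps, 0 < eps -> exists d, 0 < d /\
  forall v, Rabs (v - w) < d -> objective psi x v <= objective psi x w + eps.
Proof.
  intros Hc x w eps Heps.
  destruct (psimax_usc psi Hc w (eps/2) ltac:(lra)) as [d1 [Hd1 H1]].
  set (A := Rabs (w - x)). assert (HA : 0 <= A) by apply Rabs_pos.
  set (d2 := eps / (2 * (A + 1))).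
  assert (Hd2 : 0 < d2) by (unfold d2; apply Rdiv_lt_0_compat; lra).
  assert (Hd2A : d2 * (A + 1) = eps / 2) by (unfold d2; field; lra).
  assert (Hm := Rmin_l d1 d2). assert (Hm2 := Rmin_r d1 d2).
  assert (Hp : 0 < Rmin d1 d2) by (apply Rmin_pos; auto).
  exists (Rmin d1 d2); split; auto. intros v Hv.
  specialize (H1 v ltac:(lra)).
  unfold objective.
  assert (Hq : - ((v - w) * (w - x)) <= Rabs (v - w) * A).
  { unfold A. rewrite <- Rabs_mult, <- Rabs_Ropp. apply Rle_abs. }
  assert (Hq2 : Rabs (v - w) * A <= d2 * A)
    by (apply Rmult_le_compat_r; lra).
  assert (Hsq : (v - x) ^ 2 = (w - x) ^ 2 + 2 * ((v - w) * (w - x)) + (v - w) ^ 2) by ring.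
  assert (Hsq2 : 0 <= (v - w) ^ 2) by (apply pow2_ge_0).
  rewrite Hsq. nra.
Qed.

Lemma sq_bound_of_sub psi : subquadratic psi -> exists M, 1 <= M /\
  forall u, M < Rabs u -> psi u <= u ^ 2 / 8.
Proof.
  intros Hs. destruct (Hs (/8) ltac:(lra)) as [M HM].
  exists (Rmax M 1). split; [apply Rmax_r|]. intros u Hu.
  assert (HM1 := Rmax_l M 1). assert (HM2 := Rmax_r M 1).
  specialize (HM u ltac:(lra)). apply Rabs_def2 in HM.
  assert (Hu0 : u <> 0) by (intro; subst; rewrite Rabs_R0 in Hu; lra).
  assert (Hp : 0 < u ^ 2) by (replace (u ^ 2) with (Rsqr u) by (unfold Rsqr; ring); apply Rsqr_pos_lt; auto).
  assert (Heq : psi u = psi u / u ^ 2 * u ^ 2) by (field; auto).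
  rewrite Heq. destruct HM. nra.
Qed.

Lemma abs_cases u : (Rabs u = u /\ 0 <= u) \/ (Rabs u = - u /\ u < 0).
Proof. unfold Rabs; destruct (Rcase_abs u); [right|left]; split; lra. Qed.

Lemma obj_coer psi : cadlag psi -> subquadratic psi -> forall x beta, exists R0, 0 < R0 /\
  forall w, R0 <= Rabs w -> objective psi x w + beta <= - Rabs w.
Proof.
  intros [Hrc Hll] Hs x beta.
  destruct (sq_bound_of_sub psi Hs) as [M [HM1 HM]].
  assert (Hax := Rabs_pos x). assert (Hab := Rabs_pos beta).
  exists (M + 2 + 4 * (Rabs x + Rabs beta + 2)). split; [lra|].
  intros w Hw. set (r := Rabs w) in *.
  assert (Hpm : psimax psi w <= (r + 1) ^ 2 / 8).
  { unfold psimax. apply Rmax_lub.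
    - assert (H := HM w ltac:(fold r; lra)).
      assert (w ^ 2 = r ^ 2) by (unfold r; destruct (abs_cases w) as [[-> _]|[-> _]]; ring).
      nra.
    - apply (LL_le psi w); [apply LL_spec; auto|]. exists 1. split; [lra|].
      intros u Hu.
      assert (Hr : Rabs u <= r + 1 /\ r - 1 <= Rabs u).
      { unfold r. destruct (abs_cases u) as [[-> ?]|[-> ?]];
        destruct (abs_cases w) as [[-> ?]|[-> ?]]; split; lra. }
      assert (H := HM u ltac:(fold r in Hr; lra)).
      assert (u ^ 2 = Rabs u ^ 2) by (destruct (abs_cases u) as [[-> _]|[-> _]]; ring).
      assert (0 <= Rabs u) by apply Rabs_pos. nra. }
  unfold objective.
  assert (Hw2 : w ^ 2 = r ^ 2) by (unfold r; destruct (abs_cases w) as [[-> _]|[-> _]]; ring).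
  assert (Hwx : w * x <= r * Rabs x).
  { unfold r. rewrite <- Rabs_mult. apply Rle_abs. }
  assert (Hbb : beta <= Rabs beta) by apply Rle_abs.
  assert (Hsq : (w - x) ^ 2 = w ^ 2 - 2 * (w * x) + x ^ 2) by ring.
  assert (Hx2 : 0 <= x ^ 2) by apply pow2_ge_0.
  assert (Hr0 : 0 <= r) by (unfold r; apply Rabs_pos).
  assert (Hrr : r * r >= r * (4 * (Rabs x + Rabs beta + 2))) by nra.
  assert (0 <= r * Rabs x) by nra.
  assert (Rabs beta <= r * Rabs beta) by nra.
  rewrite Hsq, Hw2. nra.
Qed.

Lemma obj_maxex psi : cadlag psi -> subquadratic psi -> forall x,
  exists ws, forall v, objective psi x v <= objective psi x ws.
Proof.
  intros Hc Hs x.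
  destruct (obj_coer psi Hc Hs x (- objective psi x 0)) as [R0 [HR0 HR]].
  set (g := objective psi x).
  assert (Hbd : exists K, True /\ forall u, -R0 <= u <= R0 -> g u <= K).
  { apply compact_bound; auto; [lra|]. intros u Hu.
    destruct (obj_usc psi Hc x u 1 ltac:(lra)) as [d [Hd Hd']].
    exists d; split; auto. exists (g u + 1); split; auto. }
  destruct Hbd as [K [_ HK]].
  set (E := fun r => exists u, -R0 <= u <= R0 /\ r = g u).
  assert (HbE : bound E) by (exists K; intros r [u [Hu ->]]; auto).
  assert (HnE : exists r, E r) by (exists (g 0); exists 0; split; [lra|auto]).
  destruct (completeness E HbE HnE) as [M [HM1 HM2]].
  assert (Hg0 : g 0 <= M) by (apply HM1; exists 0; split; [lra|auto]).
  destruct (classic (exists u, -R0 <= u <= R0 /\ M <= g u)) as [[u [Hu HMu]] | Hno].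
  - exists u. intros v. fold g.
    destruct (Rle_or_lt (Rabs v) R0) as [Hv|Hv].
    + assert (g v <= M); [|lra]. apply HM1. exists v. split; auto.
      destruct (abs_cases v) as [[? ?]|[? ?]]; split; lra.
    + specialize (HR v ltac:(lra)). assert (Hr := Rabs_pos v). unfold g in *. lra.
  - exfalso.
    assert (Hb : exists K, K < M /\ forall u, -R0 <= u <= R0 -> g u <= K).
    { apply compact_bound.
      - intros K1 K2 ? ?. unfold Rmax; destruct Rle_dec; auto.
      - lra.
      - intros u Hu.
        assert (Hgu : g u < M) by (apply Rnot_le_lt; intro; apply Hno; eauto).
        destruct (obj_usc psi Hc x u ((M - g u)/2) ltac:(lra)) as [d [Hd Hd']].
        exists d; split; auto. exists (g u + (M - g u)/2); split; [lra|]. auto. }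
    destruct Hb as [K' [HK' HK'']].
    assert (M <= K'); [|lra]. apply HM2. intros r [u [Hu ->]]. auto.
Qed.

Lemma argmax_lub_in psi : cadlag psi -> forall x y,
  is_lub (argmax psi x) y -> argmax psi x y.
Proof.
  intros Hc x y [Hy1 Hy2].
  assert (Hne : exists w0, argmax psi x w0).
  { apply NNPP; intro Hno. assert (y <= y - 1); [|lra]. apply Hy2.
    intros w Hw. exfalso; eauto. }
  destruct Hne as [w0 Hw0].
  intro v. eapply Rle_trans; [apply Hw0|].
  apply Rnot_lt_le; intro Hlt.
  destruct (obj_usc psi Hc x y ((objective psi x w0 - objective psi x y)/2) ltac:(lra))
    as [d [Hd Hd']].
  assert (y <= y - d); [|lra]. apply Hy2. intros w Hw.
  assert (Hwy := Hy1 w Hw).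
  apply Rnot_lt_le; intro Hlt2.
  specialize (Hd' w ltac:(apply Rabs_def1; lra)). specialize (Hw w0). lra.
Qed.

Lemma argmax_lub_ex psi : cadlag psi -> subquadratic psi -> forall x,
  exists a, is_lub (argmax psi x) a.
Proof.
  intros Hc Hs x. destruct (obj_maxex psi Hc Hs x) as [ws Hws].
  destruct (obj_coer psi Hc Hs x (- objective psi x ws)) as [R0 [HR0 HR]].
  assert (Hb : bound (argmax psi x)).
  { exists R0. intros w Hw. apply Rnot_lt_le; intro Hlt.
    assert (Hwa : Rabs w = w) by (apply Rabs_right; lra).
    specialize (HR w ltac:(rewrite Hwa; lra)). rewrite Hwa in HR.
    specialize (Hw ws). lra. }
  destruct (completeness _ Hb (ex_intro _ ws Hws)) as [a Ha]. eauto.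
Qed.

Lemma obj_gamma psi : cadlag psi -> subquadratic psi -> forall x m a1,
  (forall w, a1 <= w -> objective psi x w < m) ->
  exists g, 0 < g /\ forall w, a1 <= w -> objective psi x w <= m - g * (w - a1).
Proof.
  intros Hc Hs x m a1 Hlt.
  destruct (obj_coer psi Hc Hs x (- m + Rabs a1)) as [R0 [HR0 HR]].
  set (b := Rmax R0 a1 + 1).
  assert (Hb1 := Rmax_l R0 a1). assert (Hb2 := Rmax_r R0 a1).
  assert (Hbd : exists K, K < m /\ forall u, a1 <= u <= b -> objective psi x u <= K).
  { apply compact_bound.
    - intros K1 K2 ? ?. unfold Rmax; destruct Rle_dec; auto.
    - unfold b; lra.
    - intros u Hu. assert (Hgu := Hlt u ltac:(lra)).
      destruct (obj_usc psi Hc x u ((m - objective psi x u)/2) ltac:(lra)) as [d [Hd Hd']].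
      exists d; split; auto. exists (objective psi x u + (m - objective psi x u)/2); split; [lra|]. auto. }
  destruct Hbd as [K [HK HK']].
  assert (Hba : 0 < b - a1) by (unfold b; lra).
  set (q := (m - K) / (b - a1)).
  assert (Hq : 0 < q) by (unfold q; apply Rdiv_lt_0_compat; lra).
  assert (Hqb : q * (b - a1) = m - K) by (unfold q; field; lra).
  exists (Rmin 1 q). assert (Hm1 := Rmin_l 1 q). assert (Hm2 := Rmin_r 1 q).
  assert (Hp : 0 < Rmin 1 q) by (apply Rmin_pos; lra).
  split; auto. intros w Hw.
  destruct (Rle_or_lt w b) as [Hwb|Hwb].
  - specialize (HK' w ltac:(lra)).
    assert (Rmin 1 q * (w - a1) <= q * (b - a1)); [|lra].
    apply Rmult_le_compat; lra.
  - assert (Hwa : Rabs w = w) by (apply Rabs_right; unfold b in Hwb; lra).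
    specialize (HR w ltac:(rewrite Hwa; unfold b in Hwb; lra)).
    rewrite Hwa in HR. assert (Ha1 := Rle_abs (- a1)). rewrite Rabs_Ropp in Ha1.
    assert (Rmin 1 q * (w - a1) <= 1 * (w - a1)) by (apply Rmult_le_compat_r; lra).
    lra.
Qed.

Lemma concave_affine p q : concave (fun w => p + q * w).
Proof. intros x y t _. right. ring. Qed.

Lemma concave_min f g : concave f -> concave g -> concave (fun w => Rmin (f w) (g w)).
Proof.
  intros Hf Hg x y t Ht. apply Rmin_glb.
  - eapply Rle_trans; [|apply Hf; auto].
    apply Rplus_le_compat; apply Rmult_le_compat_l; try lra; apply Rmin_l.
  - eapply Rle_trans; [|apply Hg; auto].
    apply Rplus_le_compat; apply Rmult_le_compat_l; try lra; apply Rmin_r.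
Qed.

Lemma concave3 C u v w : concave C -> u < v -> v < w ->
  (w - v) * C u + (v - u) * C w <= (w - u) * C v.
Proof.
  intros HC Huv Hvw.
  set (t := (w - v) / (w - u)).
  assert (Ht : 0 <= t <= 1).
  { unfold t. split.
    - apply Rmult_le_pos; [lra|]. left; apply Rinv_0_lt_compat; lra.
    - apply Rmult_le_reg_r with (w - u); [lra|]. unfold Rdiv.
      rewrite Rmult_assoc, Rinv_l; lra. }
  assert (H := HC u w t Ht).
  replace (t * u + (1 - t) * w) with v in H by (unfold t; field; lra).
  assert (He : (w - u) * (t * C u + (1 - t) * C w) = (w - v) * C u + (v - u) * C w)
    by (unfold t; field; lra).
  rewrite <- He. apply Rmult_le_compat_l; lra.
Qed.

Lemma RD_ge C c z sig : is_right_deriv C c ->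
  (exists d, 0 < d /\ forall t, 0 < t < d -> sig * t <= C (z + t) - C z) -> sig <= c z.
Proof.
  intros Hrd [d0 [Hd0 H]]. apply Rnot_lt_le; intro Hlt.
  destruct (Hrd z (sig - c z) ltac:(lra)) as [d [Hd Hd']].
  assert (Hm := Rmin_l d d0). assert (Hm2 := Rmin_r d d0).
  assert (Hp : 0 < Rmin d d0) by (apply Rmin_pos; auto).
  set (t := Rmin d d0 / 2).
  specialize (Hd' t ltac:(unfold t; lra)). specialize (H t ltac:(unfold t; lra)).
  assert (sig <= (C (z + t) - C z) / t).
  { apply Rmult_le_reg_r with t; [unfold t; lra|]. unfold Rdiv.
    rewrite Rmult_assoc, Rinv_l; [lra|unfold t; lra]. }
  apply Rabs_def2 in Hd'. lra.
Qed.

Lemma RD_le C c z sig : is_right_deriv C c ->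
  (exists d, 0 < d /\ forall t, 0 < t < d -> C (z + t) - C z <= sig * t) -> c z <= sig.
Proof.
  intros Hrd [d0 [Hd0 H]]. apply Rnot_lt_le; intro Hlt.
  destruct (Hrd z (c z - sig) ltac:(lra)) as [d [Hd Hd']].
  assert (Hm := Rmin_l d d0). assert (Hm2 := Rmin_r d d0).
  assert (Hp : 0 < Rmin d d0) by (apply Rmin_pos; auto).
  set (t := Rmin d d0 / 2).
  specialize (Hd' t ltac:(unfold t; lra)). specialize (H t ltac:(unfold t; lra)).
  assert ((C (z + t) - C z) / t <= sig).
  { apply Rmult_le_reg_r with t; [unfold t; lra|]. unfold Rdiv.
    rewrite Rmult_assoc, Rinv_l; [lra|unfold t; lra]. }
  apply Rabs_def2 in Hd'. lra.
Qed.

Lemma support_line C c : concave C -> is_right_deriv C c ->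
  forall z w, C w <= C z + c z * (w - z).
Proof.
  intros HC Hrd z w.
  destruct (Rtotal_order w z) as [Hlt | [Heq | Hgt]].
  - set (s := (C z - C w) / (z - w)).
    assert (Hs : c z <= s).
    { apply (RD_le C c z s Hrd). exists 1. split; [lra|]. intros t Ht.
      assert (H := concave3 C w z (z + t) HC Hlt ltac:(lra)).
      assert (Hs' : s * (z - w) = C z - C w) by (unfold s; field; lra).
      assert ((z - w) * (C (z + t) - C z) <= (z - w) * (s * t)); [|nra].
      nra. }
    assert (Hs' : s * (z - w) = C z - C w) by (unfold s; field; lra).
    nra.
  - subst. lra.
  - set (s := (C w - C z) / (w - z)).
    assert (Hs : s <= c z).
    { apply (RD_ge C c z s Hrd). exists (w - z). split; [lra|]. intros t Ht.
      assert (H := concave3 C z (z + t) w HC ltac:(lra) ltac:(lra)).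
      assert (Hs' : s * (w - z) = C w - C z) by (unfold s; field; lra).
      assert ((w - z) * (s * t) <= (w - z) * (C (z + t) - C z)); [|nra].
      nra. }
    assert (Hs' : s * (w - z) = C w - C z) by (unfold s; field; lra).
    nra.
Qed.

Lemma h_obj psi x w : psimax psi w - / 2 * w ^ 2 = objective psi x w - x * w + / 2 * x ^ 2.
Proof. unfold objective. field. Qed.

Lemma aff_bound psi Cbar : is_concave_majorant (fun x => psimax psi x - / 2 * x ^ 2) Cbar ->
  forall x m, (forall v, objective psi x v <= m) ->
  forall w, Cbar w <= m - x * w + / 2 * x ^ 2.
Proof.
  intros [HC [Hge Hmin]] x m Hm w.
  assert (H := Hmin (fun w => (m + / 2 * x ^ 2) + (- x) * w) (concave_affine _ _)).
  assert (H' : Cbar w <= m + / 2 * x ^ 2 + - x * w); [|lra].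
  apply H. intros v. rewrite (h_obj psi x v). specialize (Hm v). lra.
Qed.

Lemma low_bound psi Cbar : is_concave_majorant (fun x => psimax psi x - / 2 * x ^ 2) Cbar ->
  forall x w, objective psi x w - x * w + / 2 * x ^ 2 <= Cbar w.
Proof.
  intros [HC [Hge Hmin]] x w. rewrite <- (h_obj psi x w). apply Hge.
Qed.

Lemma drop psi Cbar : cadlag psi -> subquadratic psi ->
  is_concave_majorant (fun x => psimax psi x - / 2 * x ^ 2) Cbar ->
  forall x m a1, (forall w, objective psi x w <= m) ->
  (forall w, a1 <= w -> objective psi x w < m) ->
  forall z, a1 < z -> Cbar z < m - x * z + / 2 * x ^ 2.
Proof.
  intros Hc Hs Hmaj x m a1 Hm Hlt z Hz.
  destruct (obj_gamma psi Hc Hs x m a1 Hlt) as [g [Hg Hg']].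
  destruct Hmaj as [HC [Hge Hmin]].
  set (D := fun w => Rmin ((m + / 2 * x ^ 2) + (- x) * w)
                          ((m + / 2 * x ^ 2 + g * a1) + (- x - g) * w)).
  assert (HD : Cbar z <= D z).
  { apply Hmin.
    - apply concave_min; apply concave_affine.
    - intros v. unfold D. rewrite (h_obj psi x v). apply Rmin_glb.
      + specialize (Hm v). lra.
      + destruct (Rle_or_lt a1 v) as [Hv|Hv].
        * specialize (Hg' v Hv). lra.
        * specialize (Hm v). assert (0 <= g * (a1 - v)) by (apply Rmult_le_pos; lra). lra. }
  unfold D in HD. assert (H2 := Rmin_r ((m + / 2 * x ^ 2) + (- x) * z)
                          ((m + / 2 * x ^ 2 + g * a1) + (- x - g) * z)).
  assert (0 < g * (z - a1)) by (apply Rmult_lt_0_compat; lra). lra.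
Qed.

Lemma key psi Cbar cbar : cadlag psi -> subquadratic psi ->
  is_concave_majorant (fun x => psimax psi x - / 2 * x ^ 2) Cbar ->
  is_right_deriv Cbar cbar ->
  forall z, exists x a, a_rel psi x a /\ z <= a /\ forall w, z <= w < a -> cbar w = cbar z.
Proof.
  intros Hc Hs Hmaj Hrd z.
  assert (HC : concave Cbar) by apply Hmaj.
  set (x := - cbar z).
  destruct (argmax_lub_ex psi Hc Hs x) as [a Ha].
  assert (Haa := argmax_lub_in psi Hc x a Ha).
  set (m := objective psi x a).
  assert (Hm : forall v, objective psi x v <= m) by exact Haa.
  assert (Haff := aff_bound psi Cbar Hmaj x m Hm).
  assert (Hlow := low_bound psi Cbar Hmaj x).
  assert (HSa := support_line Cbar cbar HC Hrd z a).
  assert (Hza : Cbar z = m - x * z + / 2 * x ^ 2).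
  { specialize (Haff z). specialize (Hlow a). fold m in Hlow. unfold x in *. nra. }
  assert (Hle : z <= a).
  { apply Rnot_lt_le; intro Hlt.
    assert (H := drop psi Cbar Hc Hs Hmaj x m ((a + z)/2) Hm).
    assert (Hz : Cbar z < m - x * z + / 2 * x ^ 2); [|lra].
    apply H; [|lra]. intros w Hw. apply Rnot_le_lt; intro Hmw.
    assert (argmax psi x w) by (intro v; specialize (Hm v); lra).
    destruct Ha as [Ha1 _]. specialize (Ha1 w H0). lra. }
  exists x, a. split; auto. split; auto.
  assert (Heq : forall v, z <= v <= a -> Cbar v = m - x * v + / 2 * x ^ 2).
  { intros v Hv. apply Rle_antisym; [apply Haff|].
    destruct (Req_dec v a) as [->|Hva]; [apply Hlow|].
    destruct (Req_dec v z) as [->|Hvz]; [lra|].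
    assert (H := concave3 Cbar z v a HC ltac:(lra) ltac:(lra)).
    specialize (Hlow a). fold m in Hlow.
    assert ((a - z) * (m - x * v + / 2 * x ^ 2) <= (a - z) * Cbar v); [|nra].
    assert ((a - z) * (m - x * v + / 2 * x ^ 2) =
            (a - v) * (m - x * z + / 2 * x ^ 2) + (v - z) * (m - x * a + / 2 * x ^ 2)) by ring.
    rewrite H0, <- Hza.
    assert ((v - z) * (m - x * a + / 2 * x ^ 2) <= (v - z) * Cbar a)
      by (apply Rmult_le_compat_l; lra).
    lra. }
  intros w Hw. apply Rle_antisym.
  - apply (RD_le Cbar cbar w (cbar z) Hrd). exists (a - w). split; [lra|].
    intros t Ht. rewrite (Heq (w + t)), (Heq w) by lra. unfold x. right; ring.
  - apply (RD_ge Cbar cbar w (cbar z) Hrd). exists (a - w). split; [lra|].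
    intros t Ht. rewrite (Heq (w + t)), (Heq w) by lra. unfold x. right; ring.
Qed.

Lemma part2 psi Cbar cbar : cadlag psi -> subquadratic psi ->
  is_concave_majorant (fun x => psimax psi x - / 2 * x ^ 2) Cbar ->
  is_right_deriv Cbar cbar ->
  forall y, a_range psi y -> supp_dc cbar y.
Proof.
  intros Hc Hs Hmaj Hrd y [x Ha] eps Heps Hst. unfold stieltjes_open in Hst.
  assert (HC : concave Cbar) by apply Hmaj.
  assert (Haa := argmax_lub_in psi Hc x y Ha).
  set (m := objective psi x y).
  assert (Hm : forall v, objective psi x v <= m) by exact Haa.
  assert (Haff := aff_bound psi Cbar Hmaj x m Hm).
  assert (Hlow := low_bound psi Cbar Hmaj x).
  assert (HS := support_line Cbar cbar HC Hrd).
  assert (Hmon : forall u w, u < w -> cbar w <= cbar u).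
  { intros u w Huw. assert (H1 := HS u w). assert (H2 := HS w u). nra. }
  assert (HL := LL_spec cbar (y + eps) (MON_LL cbar (y + eps) Hmon)).
  set (L := left_lim cbar (y + eps)) in *.
  assert (HLe : forall w, w < y + eps -> L <= cbar w).
  { intros w Hw. apply (LL_le cbar (y + eps)); auto. exists (y + eps - w). split; [lra|].
    intros u Hu. apply Hmon. lra. }
  set (s := cbar (y - eps)).
  assert (Hconst : forall w, y - eps <= w < y + eps -> cbar w = s).
  { intros w Hw. apply Rle_antisym.
    - destruct (Req_dec w (y - eps)) as [->|Hne]; [unfold s; lra|]. apply Hmon; lra.
    - specialize (HLe w ltac:(lra)). unfold s; lra. }
  assert (Hp : Cbar (y + eps/2) = Cbar y + s * (eps/2)).
  { assert (H1 := HS y (y + eps/2)). assert (H2 := HS (y + eps/2) y).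
    rewrite (Hconst y) in H1 by lra. rewrite (Hconst (y + eps/2)) in H2 by lra.
    apply Rle_antisym; [lra|]. nra. }
  assert (Hn : Cbar (y - eps/2) = Cbar y - s * (eps/2)).
  { assert (H1 := HS y (y - eps/2)). assert (H2 := HS (y - eps/2) y).
    rewrite (Hconst y) in H1 by lra. rewrite (Hconst (y - eps/2)) in H2 by lra.
    apply Rle_antisym; [nra|]. nra. }
  assert (Hy : Cbar y = m - x * y + / 2 * x ^ 2).
  { apply Rle_antisym; [apply Haff|]. apply Hlow. }
  assert (H1 := Haff (y + eps/2)). assert (H2 := Haff (y - eps/2)).
  assert (Hsx : s * (eps/2) = - x * (eps/2)) by nra.
  assert (Hz : Cbar (y + eps/2) < m - x * (y + eps/2) + / 2 * x ^ 2).
  { apply (drop psi Cbar Hc Hs Hmaj x m (y + eps/4) Hm); [|lra].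
    intros w Hw. apply Rnot_le_lt; intro Hmw.
    assert (argmax psi x w) by (intro v; specialize (Hm v); lra).
    destruct Ha as [Ha1 _]. specialize (Ha1 w H). lra. }
  nra.
Qed.

Theorem lemma2p1 (psi0 : R -> R) (Cbar cbar : R -> R) :
  cadlag psi0 ->
  subquadratic psi0 ->
  is_concave_majorant (fun x => psimax psi0 x - / 2 * x ^ 2) Cbar ->
  is_right_deriv Cbar cbar ->
  (forall y, supp_dc cbar y -> shock_structure psi0 y) /\
  (forall y, a_range psi0 y -> supp_dc cbar y) /\
  (closed_setR (a_range psi0) ->
     forall y, supp_dc cbar y <-> shock_structure psi0 y).
Proof.
  intros Hc Hs Hmaj Hrd.
  assert (P1 : forall y, supp_dc cbar y -> shock_structure psi0 y).
  { intros y Hsupp eps Heps. apply NNPP; intro Hno.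
    apply (Hsupp (eps/2)); [lra|]. unfold stieltjes_open.
    destruct (key psi0 Cbar cbar Hc Hs Hmaj Hrd (y - eps/2)) as [x [a [Ha [Hza Hc']]]].
    assert (Hay : y + eps <= a).
    { apply Rnot_lt_le; intro Hlt. apply Hno. exists a. split; [exists x; auto|].
      apply Rabs_def1; lra. }
    rewrite (LL_const cbar (y + eps/2) (cbar (y - eps/2))); [lra|].
    exists eps. split; auto. intros u Hu. apply Hc'. lra. }
  assert (P2 := part2 psi0 Cbar cbar Hc Hs Hmaj Hrd).
  split; auto. split; auto.
  intros Hcl y. split; auto.
Qed.
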